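(* Let $Q=P_1\oplus\dots\oplus P_n$ be an ordinal sum of finite posets and let $r:Q\to R$ be a retraction. If $r[P_i]\not\subseteq P_i$ for some $i\in[1,n]$, then $R$ has the fixed point property.
   Context: The ordinal sum $P_1\oplus\dots\oplus P_n$ of pairwise disjoint posets has carrier $\bigcup_i P_i$, with $x\preceq y$ iff ($x,y\in P_i$ and $x\le_i y$) or ($x\in P_i$, $y\in P_j$, $i<j$). A retraction $r:Q\to R$ is an idempotent order-preserving map $Q\to Q$ with image $R$ (an induced subposet). A poset has the fixed point property if every order-preserving self-map has a fixed point. *)

(* Defs.v *)
From mathcomp Require Import all_boot all_order.
Set Implicit Arguments. Unset Strict Implicit. Unset Printing Implicit Defensive.
Import Order.Theory.
Local Open Scope order_scope.

(* A finite poset Q (carrier T : finPOrderType) is the ordinal sum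
   P_0 (+) ... (+) P_{n-1} of its blocks P_i = [set x | blk x == i]
   (each P_i carrying the induced order): x <= y iff
   (x, y lie in the same block and x <= y there) or the block of x
   comes strictly before the block of y. *)
Definition is_ordinal_sum d (T : finPOrderType d) (n : nat) (blk : T -> 'I_n) :=
  forall x y : T, (x <= y) <-> ((blk x == blk y) && (x <= y) \/ (blk x < blk y)%N).

Definition block d (T : finPOrderType d) (n : nat) (blk : T -> 'I_n) (i : 'I_n)
  : {set T} := [set x | blk x == i].

(* r : Q -> Q is a retraction: order-preserving and idempotent; its image
   (with the induced order) is the retract R. *)
Definition is_retraction d (T : finPOrderType d) (r : T -> T) :=
  {homo r : x y / x <= y} /\ (forall x, r (r x) = r x).

Definition fixed_point_property d (T : finPOrderType d) (R : {set T}) :=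
  forall f : T -> T, (forall x, x \in R -> f x \in R) ->
    {in R &, {homo f : x y / x <= y}} -> exists2 x, x \in R & f x = x.

(* Main.v *)
Require Import Defs.
From mathcomp Require Import all_boot all_order.
Import Order.Theory.
Local Open Scope order_scope.

Lemma fp_up d (T : finPOrderType d) (R : {set T}) (f : T -> T) a :
  a \in R -> (forall x, x \in R -> f x \in R) ->
  {in R &, {homo f : x y / x <= y}} -> a <= f a ->
  exists2 x, x \in R & f x = x.
Proof.
move=> aR fR fh afa.
pose S := [pred y | (y \in R) && (y <= f y)].
have aS : a \in S by rewrite inE aR afa.
case: (@arg_maxnP T a S (fun y => #|[set z : T | z <= y]|) aS) => y /andP [yR yfy] ymax.
have fyS : f y \in S by rewrite inE fR // fh // fR.
have sub : [set z : T | z <= y] \subset [set z : T | z <= f y].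
  by apply/subsetP => z; rewrite !inE => zy; apply: le_trans yfy.
have := ymax _ fyS => cle.
have eqs : [set z : T | z <= y] = [set z : T | z <= f y].
  by apply/eqP; rewrite eqEcard sub /=; exact: cle.
have : f y \in [set z : T | z <= f y] by rewrite inE.
rewrite -eqs inE => fyy.
by exists y => //; apply/le_anti; rewrite fyy yfy.
Qed.

Lemma fp_down d (T : finPOrderType d) (R : {set T}) (f : T -> T) a :
  a \in R -> (forall x, x \in R -> f x \in R) ->
  {in R &, {homo f : x y / x <= y}} -> f a <= a ->
  exists2 x, x \in R & f x = x.
Proof.
move=> aR fR fh afa.
pose S := [pred y | (y \in R) && (f y <= y)].
have aS : a \in S by rewrite inE aR afa.
case: (@arg_maxnP T a S (fun y => #|[set z : T | y <= z]|) aS) => y /andP [yR yfy] ymax.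
have fyS : f y \in S by rewrite inE fR // fh // fR.
have sub : [set z : T | y <= z] \subset [set z : T | f y <= z].
  by apply/subsetP => z; rewrite !inE => zy; apply: le_trans zy.
have := ymax _ fyS => cle.
have eqs : [set z : T | y <= z] = [set z : T | f y <= z].
  by apply/eqP; rewrite eqEcard sub /=; exact: cle.
have : f y \in [set z : T | f y <= z] by rewrite inE.
rewrite -eqs inE => fyy.
by exists y => //; apply/le_anti; rewrite fyy yfy.
Qed.

Theorem lemma2p1 (d : Order.disp_t) (T : finPOrderType d) (n : nat) (blk : T -> 'I_n) (r : T -> T) :
  is_ordinal_sum blk -> is_retraction r ->
  (exists i : 'I_n, ~~ (r @: block blk i \subset block blk i)) ->
  fixed_point_property (r @: [set: T]).
Proof.
move=> os [rh rr] [i /subsetPn [z /imsetP [x xi ->]]].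
rewrite !inE in xi * => /eqP rxi; move/eqP: xi => xi.
have comp : forall y, r y <= r x \/ r x <= r y.
  move=> y.
  have [lt|gt|eq] := ltngtP (blk (r x)) i.
  - case: (ltnP (blk (r x)) (blk y)) => h.
      right; rewrite -rr; apply: rh; apply/os; by right.
    left; apply: rh; apply/os; right; rewrite xi; exact: leq_ltn_trans h lt.
  - case: (ltnP (blk y) (blk (r x))) => h.
      left; rewrite -[r x]rr; apply: rh; apply/os; by right.
    right; apply: rh; apply/os; right; rewrite xi; exact: leq_trans gt h.
  - by exfalso; apply: rxi; apply: val_inj.
move=> f fR fh.
have aR : r x \in r @: [set: T] by apply: imset_f.
have := fR _ aR => /imsetP [y _ fy].
case: (comp y); rewrite -fy => h.
  exact: fp_down aR fR fh h.
exact: fp_up aR fR fh h.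
Qed.
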